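(* Let $m\geq 1$, $n\geq 3$, and let $i,j\in V$. If $P$ is a walk of length $2n-1$ in $D^m_n$ from $i$ to $j$, then exactly one of the following occurs: (a) $i=1$ and $j=(k-1)(n-1)+n$ for some $k\in\{1,\ldots,m\}$, and $P=P_{1j}\circ C^s$ for some $s\in\{1,\ldots,m\}$, where $P_{1j}$ is the unique walk of length $n-1$ from $1$ to $j$; (b) $j=1$ and $i=(k-1)(n-1)+2$ for some $k\in\{1,\ldots,m\}$, and $P=C^s\circ P_{i1}$ for some $s\in\{1,\ldots,m\}$, where $P_{i1}$ is the unique walk of length $n-1$ from $i$ to $1$; (c) there exist $k,r\in\{1,\ldots,m\}$ and $\ell\in\{3,\ldots,n\}$ with $i=(k-1)(n-1)+\ell$ and $j=(r-1)(n-1)+(\ell-1)$, and $P=Q_{1j}\circ C^s\circ Q_{i1}$ for some $s\in\{1,\ldots,m\}$, where $Q_{i1}$ is the shortest walk from $i$ to $1$ and $Q_{1j}$ is the shortest walk from $1$ to $j$, and $Q_{1j}\circ Q_{i1}$ is the unique walk of length $n-1$ from $i$ to $j$.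
   Context: For integers $m\geq 1$, $n\geq 3$, the oriented Dutch windmill graph $D^m_n$ is the directed graph with vertex set $V=\{1,2,\ldots,m(n-1)+1\}$ whose directed edges $(a,b)$ are exactly: $(1,(k-1)(n-1)+2)$ for $k\in\{1,\ldots,m\}$; $((k-1)(n-1)+i,(k-1)(n-1)+i+1)$ for $k\in\{1,\ldots,m\}$ and $i\in\{2,\ldots,n-1\}$; and $((k-1)(n-1)+n,1)$ for $k\in\{1,\ldots,m\}$. A walk is a sequence of vertices $\langle v_1,\ldots,v_r\rangle$ in which each $(v_t,v_{t+1})$ is an edge; its length is $r-1$. For $k\in\{1,\ldots,m\}$, $C^k$ is the closed walk $\langle 1,(k-1)(n-1)+2,\ldots,(k-1)(n-1)+n,1\rangle$ of length $n$. If $P=\langle v_1,\ldots,v_r\rangle$ and $Q=\langle w_1,\ldots,w_s\rangle$ are walks with $w_1=v_r$, then $Q\circ P=\langle v_1,\ldots,v_r,w_2,\ldots,w_s\rangle$ (first traverse $P$, then $Q$). *)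

(* Defs.v *)
From mathcomp Require Import all_boot.
Set Implicit Arguments. Unset Strict Implicit. Unset Printing Implicit Defensive.

Definition inV (m n v : nat) : bool := (1 <= v) && (v <= m * (n - 1) + 1).

Definition edge (m n : nat) (a b : nat) : bool :=
  has (fun k =>
    [|| (a == 1) && (b == (k - 1) * (n - 1) + 2),
        has (fun i => (a == (k - 1) * (n - 1) + i) && (b == (k - 1) * (n - 1) + i + 1))
            (iota 2 (n - 2))
      | (a == (k - 1) * (n - 1) + n) && (b == 1)])
  (iota 1 m).

Definition is_walk (m n : nat) (P : seq nat) : bool :=
  if P is v :: s then path (edge m n) v s else false.

Definition wlen (P : seq nat) : nat := (size P).-1.

Definition walk_from_to (m n : nat) (P : seq nat) (i j : nat) : Prop :=
  is_walk m n P /\ head 0 P = i /\ last 0 P = j.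

Definition unique_walk_of_len (m n : nat) (P : seq nat) (i j L : nat) : Prop :=
  walk_from_to m n P i j /\ wlen P = L /\
  forall P', walk_from_to m n P' i j -> wlen P' = L -> P' = P.

Definition shortest_walk (m n : nat) (P : seq nat) (i j : nat) : Prop :=
  walk_from_to m n P i j /\
  forall P', walk_from_to m n P' i j -> wlen P <= wlen P'.

Definition Ccyc (n k : nat) : seq nat :=
  1 :: [seq (k - 1) * (n - 1) + t | t <- iota 2 (n - 1)] ++ [:: 1].

(* Q \o P : first traverse P, then Q (assuming head Q = last P) *)
Definition wcomp (Q P : seq nat) : seq nat := P ++ behead Q.

Definition exactly_one3 (A B C : Prop) : Prop :=
  (A /\ ~ B /\ ~ C) \/ (~ A /\ B /\ ~ C) \/ (~ A /\ ~ B /\ C).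

(* Main.v *)
Require Import Defs.
From mathcomp Require Import all_boot zify.
Set Warnings "-notation-overridden".
Set Implicit Arguments. Unset Strict Implicit.
Lemma binj N a a' x y c : 0 < N -> a*N + x = a'*N + y -> c <= x < c + N -> c <= y < c + N -> a = a' /\ x = y.
Proof.
move=> hN h hx hy.
case: (ltngtP a a') => ha.
- have : a.+1 * N <= a' * N by rewrite leq_mul2r ha orbT.
  rewrite mulSn; nia.
- have : a'.+1 * N <= a * N by rewrite leq_mul2r ha orbT.
  rewrite mulSn; nia.
- subst; nia.
Qed.

Lemma binj2 n k k' x y : 3 <= n -> 1 <= k -> 1 <= k' -> 2 <= x <= n -> 2 <= y <= n ->
  (k-1)*(n-1) + x = (k'-1)*(n-1) + y -> k = k' /\ x = y.
Proof.
move=> hn hk hk' hx hy h.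
have := @binj (n-1) (k-1) (k'-1) x y 2; nia.
Qed.

Lemma edge_from1 m n b : 3 <= n -> edge m n 1 b -> exists2 c, 1 <= c <= m & b = (c-1)*(n-1)+2.
Proof.
move=> hn /hasP [k]; rewrite mem_iota => hk /or3P [/andP[_ /eqP->]| /hasP [i] | /andP[/eqP h _]].
- change nat in k; exists k; [nia|done].
- change nat in k; change nat in i; rewrite mem_iota => hi /andP[/eqP h _]. nia.
- nia.
Qed.

Lemma edge_to1 m n c : 1 <= c <= m -> edge m n 1 ((c-1)*(n-1)+2).
Proof.
move=> hc; apply/hasP; exists c; first by rewrite mem_iota; nia.
by rewrite !eqxx.
Qed.

Lemma edge_inner m n k t b : 3 <= n -> 1 <= k <= m -> 2 <= t < n ->
  edge m n ((k-1)*(n-1)+t) b -> b = (k-1)*(n-1)+t+1.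
Proof.
move=> hn hk ht /hasP [k']; rewrite mem_iota => hk' /or3P [/andP[/eqP h _]| /hasP [i] | /andP[/eqP h _]].
- nia.
- rewrite mem_iota => hi /andP[/eqP h /eqP ->].
  change nat in k'; change nat in i.
  have := @binj2 n k k' t i; nia.
- change nat in k'. have := @binj2 n k k' t n; nia.
Qed.

Lemma edge_inner' m n k t : 1 <= k <= m -> 2 <= t < n ->
  edge m n ((k-1)*(n-1)+t) ((k-1)*(n-1)+t+1).
Proof.
move=> hk ht; apply/hasP; exists k; first by rewrite mem_iota; nia.
apply/or3P; apply: Or32; apply/hasP; exists t; first by rewrite mem_iota; nia.
by rewrite !eqxx.
Qed.

Lemma edge_last m n k b : 3 <= n -> 1 <= k <= m ->
  edge m n ((k-1)*(n-1)+n) b -> b = 1.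
Proof.
move=> hn hk /hasP [k']; rewrite mem_iota => hk' /or3P [/andP[/eqP h _]| /hasP [i] | /andP[_ /eqP ->] //].
- nia.
- rewrite mem_iota => hi /andP[/eqP h _].
  change nat in k'; change nat in i.
  have := @binj2 n k k' n i; nia.
Qed.

Lemma inner_walk m n k : 3 <= n -> 1 <= k <= m -> forall s t, 2 <= t <= n ->
  path (edge m n) ((k-1)*(n-1)+t) s -> size s <= n - t ->
  s = [seq (k-1)*(n-1)+u | u <- iota t.+1 (size s)].
Proof.
move=> hn hk; elim => [|y s IH] t ht //= /andP[e p] hs.
have htn : t < n by lia.
have /(_ ltac:(lia)) hy := edge_inner hn hk _ e.
rewrite hy -addnA addn1 in p *; congr (_ :: _).
apply: IH => //; lia.
Qed.

Lemma inner_walk2 m n k : 3 <= n -> 1 <= k <= m -> forall s t, 2 <= t <= n ->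
  path (edge m n) ((k-1)*(n-1)+t) s -> n - t < size s ->
  exists s', s = [seq (k-1)*(n-1)+u | u <- iota t.+1 (n - t)] ++ 1 :: s' /\ path (edge m n) 1 s'.
Proof.
move=> hn hk; elim => [|y s IH] t ht //= /andP[e p] hs.
case: (ltnP t n) => htn.
- have /(_ ltac:(lia)) hy := edge_inner hn hk _ e.
  rewrite hy -addnA addn1 in p *.
  have [s' [-> ps']] := IH t.+1 ltac:(lia) p ltac:(lia).
  exists s'; split => //.
  by rewrite (_ : n - t = (n - t.+1).+1) //; lia.
- have etn : t = n by lia.
  rewrite etn in e; have hy := edge_last hn hk e.
  exists s; rewrite etn subnn /= -hy; split => //.
Qed.

Lemma walk1_short m n s : 1 <= m -> 3 <= n -> path (edge m n) 1 s -> size s < n ->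
  exists2 c, 1 <= c <= m & s = [seq (c-1)*(n-1)+u | u <- iota 2 (size s)].
Proof.
move=> hm hn; case: s => [|y s] /=; first by move=> _ _; exists 1.
move=> /andP[e p] hs.
have [c hc hy] := edge_from1 hn e.
exists c => //; rewrite hy; congr (_ :: _).
apply: (inner_walk hn hc) => //; first lia.
  by rewrite -hy.
lia.
Qed.

Lemma walk1_long m n s : 3 <= n -> path (edge m n) 1 s -> n <= size s ->
  exists2 c, 1 <= c <= m & exists s', s = behead (Ccyc n c) ++ s' /\ path (edge m n) 1 s'.
Proof.
move=> hn; case: s => [|y s] /=; first lia.
move=> /andP[e p] hs.
have [c hc hy] := edge_from1 hn e.
rewrite hy in p.
have [s' [es ps']] := inner_walk2 hn hc (ltac:(lia) : 2 <= 2 <= n) p ltac:(lia).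
exists c => //; exists s'; split => //.
have -> : iota 2 (n-1) = 2 :: iota 3 (n-2).
  by case: (n) hn => [|[|n']] // _; rewrite !subSS !subn0.
by rewrite /Ccyc /= hy es -catA.
Qed.

Lemma last_map_iota x b a L : last x [seq b + u | u <- iota a L.+1] = b + (a + L).
Proof. by rewrite -addn1 iotaD map_cat last_cat. Qed.

Lemma last_beheadC x n c : last x (behead (Ccyc n c)) = 1.
Proof. by rewrite /Ccyc /= cats1 last_rcons. Qed.

Lemma size_beheadC n c : 1 <= n -> size (behead (Ccyc n c)) = n.
Proof. move=> hn; rewrite /Ccyc /= size_cat size_map size_iota /=; lia. Qed.

Lemma decompV m n v : 3 <= n -> 2 <= v <= m * (n - 1) + 1 ->
  exists k t, [/\ 1 <= k <= m, 2 <= t <= n & v = (k-1)*(n-1)+t].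
Proof.
move=> hn hv.
have hN : 0 < n - 1 by lia.
move: (divn_eq (v-2) (n-1)) (ltn_pmod (v-2) hN).
move: ((v-2) %/ (n-1)) ((v-2) %% (n-1)) => q r hq hr.
have hqm : q < m.
  rewrite ltnNge; apply/negP => hmq.
  have : m * (n-1) <= q * (n-1) by rewrite leq_mul2r hmq orbT.
  nia.
exists q.+1, r.+2; split; try lia.
Qed.

Lemma last_map_iota' x b a L : 0 < L -> last x [seq b + u | u <- iota a L] = b + (a + L - 1).
Proof. case: L => // L _; rewrite last_map_iota; lia. Qed.
Unset Implicit Arguments. Set Strict Implicit.
Ltac glia := repeat match goal with x := _ |- _ => clearbody x end; repeat match goal with
 | H : context[muln ?a ?b] |- _ => let X := fresh "X" in set (X := muln a b) in *; clearbody X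
 | |- context[muln ?a ?b] => let X := fresh "X" in set (X := muln a b) in *; clearbody X end; lia.

Ltac slia := repeat match goal with x := _ |- _ => clearbody x end;
  repeat match goal with H : context[muln (subn _ _) _] |- _ => clear H end; lia.

Theorem lemma2p3 (m n i j : nat) (P : seq nat) :
  1 <= m -> 3 <= n -> inV m n i -> inV m n j ->
  walk_from_to m n P i j -> wlen P = 2 * n - 1 ->
  exactly_one3
    (* (a) *)
    (i = 1 /\ (exists k, 1 <= k <= m /\ j = (k - 1) * (n - 1) + n) /\
     exists s, 1 <= s <= m /\
       exists P1j, unique_walk_of_len m n P1j 1 j (n - 1) /\ P = wcomp P1j (Ccyc n s))
    (* (b) *)
    (j = 1 /\ (exists k, 1 <= k <= m /\ i = (k - 1) * (n - 1) + 2) /\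
     exists s, 1 <= s <= m /\
       exists Pi1, unique_walk_of_len m n Pi1 i 1 (n - 1) /\ P = wcomp (Ccyc n s) Pi1)
    (* (c) *)
    ((exists k r l, [/\ 1 <= k <= m, 1 <= r <= m, 3 <= l <= n,
        i = (k - 1) * (n - 1) + l & j = (r - 1) * (n - 1) + (l - 1)]) /\
     exists s, 1 <= s <= m /\
       exists Qi1 Q1j, [/\ shortest_walk m n Qi1 i 1, shortest_walk m n Q1j 1 j,
         unique_walk_of_len m n (wcomp Q1j Qi1) i j (n - 1) &
         P = wcomp Q1j (wcomp (Ccyc n s) Qi1)]).
Proof.
move=> hm hn hiV hjV [hw [hh hl]] hlen.
case: P hw hh hl hlen => [|v s] //= hw hh hl hlen.
rewrite /wlen /= in hlen; subst v.
case: (eqVneq i 1) => [ei | ni].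
- subst i.
  have [c hc [s1 [es ps1]]] := walk1_long hn hw (ltac:(slia) : n <= size s).
  have hs1 : size s1 = n-1 by move: hlen; rewrite es size_cat size_beheadC; slia.
  have [r hr es1] := walk1_short hm hn ps1 (ltac:(slia) : size s1 < n).
  rewrite hs1 in es1.
  have ej : j = (r-1)*(n-1)+n.
    rewrite -hl es last_cat last_beheadC es1 last_map_iota'; slia.
  left; split; [split; [done|split]|split].
  + by exists r; split.
  + exists c; split => //; exists (1 :: s1); split; [split; [|split]|].
    * split => //; split => //=; by rewrite -hl es last_cat last_beheadC.
    * by rewrite /wlen /= hs1.
    * move=> [|v' s'] [hw' [hh' hl']] hlen' //=; simpl in hh'; subst v'.
      rewrite /wlen /= in hlen'.
      have [r' hr' es'] := walk1_short hm hn hw' (ltac:(slia) : size s' < n).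
      rewrite hlen' in es'.
      move: hl'; rewrite /= es' last_map_iota' ?ej; last slia.
      move=> e.
      have [er _] := @binj2 n r' r (2 + (n-1) - 1) n hn ltac:(slia) ltac:(slia) ltac:(slia) ltac:(slia) e.
      by rewrite es1 er.
    * by rewrite /wcomp es.
  + case=> ej1 _; glia.
  + case=> [[k [r' [l [_ _ hl3 ei _]]]] _]; glia.
- have [k [t [hk ht ei]]] : exists k t, [/\ 1 <= k <= m, 2 <= t <= n & i = (k-1)*(n-1)+t].
    apply: decompV => //; move: hiV ni; rewrite /inV; slia.
  have hw0 := hw; rewrite ei in hw0.
  have [s1 [es ps1]] := inner_walk2 hn hk ht hw0 (ltac:(slia) : n - t < size s).
  set pre := [seq _ | _ <- iota t.+1 (n - t)] in es.
  have hpre : size pre = n - t by rewrite size_map size_iota.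
  have hs1 : size s1 = n + t - 2 by move: hlen; rewrite es size_cat hpre /=; slia.
  have [c hc [s2 [es1 ps2]]] := walk1_long hn ps1 (ltac:(slia) : n <= size s1).
  have hs2 : size s2 = t - 2 by move: hs1; rewrite es1 size_cat size_beheadC; slia.
  have [r hr es2] := walk1_short hm hn ps2 (ltac:(slia) : size s2 < n).
  rewrite hs2 in es2.
  have hjl : j = last 1 s2 by rewrite -hl es last_cat /= es1 last_cat last_beheadC.
  move: hw; rewrite es cat_path /= => /and3P [h1 h2 h3].
  have wQ : path (edge m n) i (pre ++ [:: 1]) by rewrite cat_path /= h1 h2.
  case: (ltnP 2 t) => ht3.
  +
    have ej : j = (r-1)*(n-1) + (t-1) by rewrite hjl es2 last_map_iota'; slia.
    right; right; split; [|split]; last split.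
    * case=> h _; by rewrite h in ni.
    * case=> h _; glia.
    * exists k, r, t; split => //; glia.
    * exists c; split => //; exists (i :: pre ++ [:: 1]), (1 :: s2); split.
      - split; first by split => //; split => //=; rewrite last_cat.
        move=> [|v' s'] [hw' [hh' hl']] //; simpl in hh'; subst v'.
        rewrite /wlen /= size_cat hpre /= leqNgt; apply/negP => hlt.
        have hw0' := hw'; rewrite /= ei in hw0'.
        have es' := inner_walk hn hk ht hw0' (ltac:(slia) : size s' <= n - t).
        move: hl'; rewrite /= es'.
        case: (size s') => [|L]; first by move=> /= h; rewrite h in ni.
        rewrite last_map_iota; glia.
      - split; first by split => //; split => //=; rewrite -hjl.
        move=> [|v' s'] [hw' [hh' hl']] //; simpl in hh'; subst v'.
        rewrite /wlen /= hs2.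
        case: (ltnP (size s') n) => hsz; last slia.
        have [r' hr' es'] := walk1_short hm hn hw' hsz.
        move: hl'; rewrite /= es'.
        case E: (size s') => [|L]; first by move=> /=; glia.
        rewrite last_map_iota size_map size_iota => e.
        have [_ el] := @binj2 n r' r (2+L) (t-1) hn ltac:(slia) ltac:(slia) ltac:(slia) ltac:(slia) (etrans e ej).
        slia.
      - split; [split; [|split]|split].
        + by rewrite /wcomp /is_walk /= -catA /= cat_path /= h1 h2 ps2.
        + done.
        + by rewrite /wcomp /= !last_cat /= -hjl.
        + by rewrite /wlen /wcomp /= !size_cat hpre hs2 /=; slia.
        + move=> [|v' s'] [hw' [hh' hl']] hlen' //; simpl in hh'; subst v'.
          rewrite /wlen /= in hlen'.
          have hw0' := hw'; rewrite /= ei in hw0'.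
          have [s'' [es' ps'']] := inner_walk2 hn hk ht hw0' (ltac:(slia) : n - t < size s').
          have hs'' : size s'' = t - 2.
            by move: hlen'; rewrite es' size_cat size_map size_iota /=; slia.
          have [r' hr' es''] := walk1_short hm hn ps'' (ltac:(slia) : size s'' < n).
          rewrite hs'' in es''.
          have : last 1 s'' = j by rewrite -hl' /= es' last_cat.
          rewrite es'' last_map_iota' ?ej; last slia.
          move=> e.
          have [er _] := @binj2 n r' r (2+(t-2)-1) (t-1) hn ltac:(slia) ltac:(slia) ltac:(slia) ltac:(slia) e.
          rewrite es' es'' es2 er /wcomp /= -catA; done.
      - by rewrite /wcomp es1 /= -!catA.
  +
    have et : t = 2 by slia.
    have s2nil : s2 = [::] by apply/size0nil; rewrite hs2 et.
    have ej : j = 1 by rewrite hjl s2nil.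
    right; left; split; [|split].
    * case=> h _; by rewrite h in ni.
    * split => //; split; first by exists k; split => //; rewrite ei et.
      exists c; split => //; exists (i :: pre ++ [:: 1]).
      split; [split; [|split]|].
      - split => //; split => //=; by rewrite last_cat.
      - by rewrite /wlen /= size_cat hpre /=; slia.
      - move=> [|v' s'] [hw' [hh' hl']] hlen' //; simpl in hh'; subst v'.
        rewrite /wlen /= in hlen'.
        have hw0' := hw'; rewrite /= ei in hw0'.
        have [s'' [es' ps'']] := inner_walk2 hn hk ht hw0' (ltac:(slia) : n - t < size s').
        have hs'' : size s'' = 0.
          by move: hlen'; rewrite es' size_cat size_map size_iota /=; slia.
        by rewrite es' (size0nil hs'').
      - by rewrite /wcomp es1 s2nil cats0 /= -catA.
    * case=> [[k' [r' [l [_ _ hl3 _ ej']]]] _]; glia.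
Qed.
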